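(* Let $n\ge2$ and let $A\in\mathbb{R}^{n\times n}$ be a nonnegative weighted shift matrix: $A_{i,i+1}=c_i\ge 0$ for $i=1,\dots,n-1$ and $A_{ij}=0$ otherwise, with $c_i>0$ for at least one $i$. Then $r(t):=r\big((1-t)A+tA^{\top}\big)$ is strictly concave in $t$ on $(0,1)$.
   Context: $r(M)$ denotes the spectral radius of a square matrix $M$; the function $t\mapsto r((1-t)A+tA^\top)$ is called Levinger's function of $A$. *)

(* Defs.v *)
From HB Require Import structures.
From mathcomp Require Import all_boot all_order all_algebra.
From mathcomp Require Import all_classical all_reals.
From mathcomp Require Import complex.
Set Implicit Arguments. Unset Strict Implicit. Unset Printing Implicit Defensive.
Import Order.TTheory GRing.Theory Num.Theory.
Local Open Scope ring_scope.
Local Open Scope classical_set_scope.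

Definition spectral_radius (R : realType) (n : nat) (M : 'M[R]_n) : R :=
  sup [set Num.sqrt (complex.Re z ^+ 2 + complex.Im z ^+ 2) | z in [set z : R[i] |
         eigenvalue (map_mx (real_complex R) M) z]].

Definition levinger (R : realType) (n : nat) (A : 'M[R]_n) (t : R) : R :=
  spectral_radius ((1 - t) *: A + t *: A^T).

Definition strictly_concave_on (R : realType) (a b : R) (f : R -> R) : Prop :=
  forall x y l : R, a < x < b -> a < y < b -> x != y -> 0 < l < 1 ->
    (1 - l) * f x + l * f y < f ((1 - l) * x + l * y).

(* Main.v *)
Require Import Defs.
From HB Require Import structures.
From mathcomp Require Import all_boot all_order all_algebra.
From mathcomp Require Import all_classical all_reals.
From mathcomp Require Import complex.
From mathcomp Require Import ring lra.
Import Order.TTheory GRing.Theory Num.Theory.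
Local Open Scope ring_scope.
From mathcomp Require Import zify.
Lemma sqrt_concave (R : realType) (x y l : R) : 0 < x < 1 -> 0 < y < 1 -> x != y -> 0 < l < 1 ->
  (1 - l) * Num.sqrt (x * (1 - x)) + l * Num.sqrt (y * (1 - y)) <
  Num.sqrt (((1 - l) * x + l * y) * (1 - ((1 - l) * x + l * y))).
Proof.
move=> /andP[x0 x1] /andP[y0 y1] xy /andP[l0 l1].
set a := Num.sqrt _; set b := Num.sqrt (y * _); set z := (1 - l) * x + l * y.
have a0 : 0 <= a by apply: sqrtr_ge0.
have b0 : 0 <= b by apply: sqrtr_ge0.
have a2 : a ^+ 2 = x * (1 - x) by rewrite sqr_sqrtr //; nra.
have b2 : b ^+ 2 = y * (1 - y) by rewrite sqr_sqrtr //; nra.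
set L := (1 - l) * a + l * b.
have L0 : 0 <= L by rewrite /L; nra.
have e1 : (1 - l) * a ^+ 2 + l * b ^+ 2 - L ^+ 2 = l * (1 - l) * (a - b) ^+ 2 by rewrite /L; ring.
have e2 : z * (1 - z) - ((1 - l) * (x * (1 - x)) + l * (y * (1 - y))) = l * (1 - l) * (x - y) ^+ 2 by rewrite /z; ring.
have p1 : 0 <= l * (1 - l) * (a - b) ^+ 2 by apply: mulr_ge0; [nra| apply: sqr_ge0].
have p2 : 0 < l * (1 - l) * (x - y) ^+ 2.
  apply: mulr_gt0; first nra.
  by rewrite exprn_even_gt0 //= subr_eq0.
have key : L ^+ 2 < z * (1 - z).
  rewrite a2 b2 in e1.
  move: e1 e2 p1 p2.
  generalize (L ^+ 2) (z * (1 - z)) ((1 - l) * (x * (1 - x)) + l * (y * (1 - y)))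
    (l * (1 - l) * (a - b) ^+ 2) (l * (1 - l) * (x - y) ^+ 2) => ? ? ? ? ? *; lra.
have -> : L = Num.sqrt (L ^+ 2) by rewrite sqrtr_sqr ger0_norm.
rewrite ltr_sqrt //; first exact: (le_lt_trans (sqr_ge0 L) key).
Qed.
Lemma eig_sim (F : fieldType) n (M N D E : 'M[F]_n) :
  E *m D = 1%:M -> D *m E = 1%:M -> D *m M = N *m D ->
  forall a, eigenvalue M a = eigenvalue N a.
Proof.
move=> ED DE DM a.
have hM : M = E *m N *m D by rewrite -mulmxA -DM mulmxA ED mul1mx.
have hN : N = D *m M *m E by rewrite DM -mulmxA DE mulmx1.
apply/eigenvalueP/eigenvalueP => -[v hv v0].
- exists (v *m E).
    have hME : E *m N = M *m E by rewrite hM -!mulmxA DE mulmx1.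
    by rewrite -mulmxA hME mulmxA hv scalemxAl.
  apply: contra v0 => /eqP h; by rewrite -[v]mulmx1 -ED mulmxA h mul0mx.
- exists (v *m D).
    by rewrite -mulmxA DM mulmxA hv scalemxAl.
  apply: contra v0 => /eqP h; by rewrite -[v]mulmx1 -DE mulmxA h mul0mx.
Qed.

Lemma eigZ (F : fieldType) n (g : 'M[F]_n) c w :
  eigenvalue g w -> eigenvalue (c *: g) (c * w).
Proof.
move=> /eigenvalueP[v hv v0]; apply/eigenvalueP; exists v => //.
by rewrite -scalemxAr hv scalerA mulrC.
Qed.
Local Open Scope classical_set_scope.
Local Open Scope complex_scope.
Definition nrm (R : realType) (z : R[i]) : R :=
  Num.sqrt (complex.Re z ^+ 2 + complex.Im z ^+ 2).
Definition eigS (R : realType) n (S : 'M[R]_n) :=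
  [set z : R[i] | eigenvalue (map_mx (real_complex R) S) z].

Arguments nrm {R}.
Arguments eigS {R n}.
Lemma srE (R : realType) n (S : 'M[R]_n) :
  spectral_radius S = sup [set nrm z | z in eigS S].
Proof. by []. Qed.

Lemma nrm_ge0 (R : realType) (z : R[i]) : 0 <= nrm z.
Proof. exact: sqrtr_ge0. Qed.

Lemma nrmZ (R : realType) (s : R) (w : R[i]) : 0 <= s -> nrm (s%:C * w) = s * nrm w.
Proof.
move=> s0; case: w => a b; rewrite /nrm /=.
have -> : (s * a - 0 * b) ^+ 2 + (s * b + 0 * a) ^+ 2 = s ^+ 2 * (a ^+ 2 + b ^+ 2) by ring.
by rewrite sqrtrM ?sqr_ge0 // sqrtr_sqr ger0_norm.
Qed.

Lemma sup_scale (R : realType) (E : set R) (s : R) : 0 < s -> has_sup E ->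
  sup [set s * x | x in E] = s * sup E.
Proof.
move=> s0 [[x0 Ex0] [u ub]].
have hub : has_ubound [set s * x | x in E].
  exists (s * u) => _ [x Ex <-]; rewrite ler_pM2l //; exact: ub.
have ne : [set s * x | x in E] !=set0 by exists (s * x0), x0.
apply/le_anti/andP; split.
  apply: ge_sup => // _ [x Ex <-]; rewrite ler_pM2l //.
  by apply: ub_le_sup => //; exists u.
rewrite -ler_pdivlMl //.
apply: ge_sup; first by exists x0.
move=> x Ex; rewrite ler_pdivlMl //.
by apply: ub_le_sup => //; exists x.
Qed.

Lemma spec_scale (R : realType) n (M S : 'M[R]_n) (s : R) : 0 < s ->
  has_sup [set nrm z | z in eigS S] ->
  (forall z, eigenvalue (map_mx (real_complex R) M) z <->
     exists w, eigenvalue (map_mx (real_complex R) S) w /\ z = s%:C * w) ->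
  spectral_radius M = s * spectral_radius S.
Proof.
move=> s0 hs heq; rewrite !srE -sup_scale //; congr sup.
apply/seteqP; split => x /=.
  move=> [z /heq [w [ew ->]] <-]; exists (nrm w); first by exists w.
  by rewrite nrmZ // ltW.
move=> [_ [w ew <-] <-]; exists (s%:C * w); first by apply/heq; exists w.
by rewrite nrmZ // ltW.
Qed.
Section Spec.
Variable R : realType.
Local Notation f := (real_complex R).

Lemma roots_fin n (S : 'M[R]_n) : exists rs : seq R[i],
  forall w, eigenvalue (map_mx f S) w = (w \in rs) /\
    char_poly (map_mx f S) = \prod_(z <- rs) ('X - z%:P).
Proof.
have [rs hp] := closed_field_poly_normal (char_poly (map_mx f S)).
rewrite (monicP (char_poly_monic _)) scale1r in hp.
by exists rs => w; rewrite eigenvalue_root_char hp root_prod_XsubC.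
Qed.

Lemma has_sup_eig n (S : 'M[R]_n) : (0 < n)%N -> has_sup [set nrm z | z in eigS S].
Proof.
move=> n0; split.
  have [a ha] := eigenvalue_closed (map_mx f S) n0.
  by exists (nrm a), a.
have [rs hrs] := roots_fin _ S.
exists (\sum_(z <- rs) nrm z) => _ [w ew <-].
have wrs : w \in rs by have [<- _] := hrs w.
rewrite (big_rem w wrs) /= lerDl; apply: sumr_ge0 => z _; exact: nrm_ge0.
Qed.

Lemma map_mxXn n' (S : 'M[R]_n'.+1) k : map_mx f (S ^+ k) = (map_mx f S) ^+ k.
Proof.
elim: k => [|k IH]; first by rewrite !expr0 map_mx1.
by rewrite !exprS -!mulmxE map_mxM IH.
Qed.

Lemma sym_pow n' (S : 'M[R]_n'.+1) k : S^T = S -> (S ^+ k)^T = S ^+ k.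
Proof.
move=> hS; elim: k => [|k IH]; first by rewrite expr0 trmx1.
have -> : S ^+ k.+1 = S *m S ^+ k by rewrite mulmxE exprS.
by rewrite trmx_mul IH hS !mulmxE -exprSr -exprS.
Qed.

Lemma sq_ne0 n' (B : 'M[R]_n'.+1) : B^T = B -> B != 0 -> B * B != 0.
Proof.
move=> hB; apply: contra => /eqP h; apply/eqP/matrixP => i j.
have e : \sum_k B i k * B k i = 0.
  by have := congr1 (fun M : 'M[R]_n'.+1 => M i i) h; rewrite -mulmxE !mxE.
have hii : \sum_k B i k ^+ 2 = 0.
  rewrite -[RHS]e; apply: eq_bigr => k _; rewrite expr2; congr (_ * _).
  by rewrite -{1}hB mxE.
have := @psumr_eq0P _ _ _ _ (fun k _ => sqr_ge0 (B i k)) hii j isT.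
by rewrite mxE => /eqP; rewrite sqrf_eq0 => /eqP.
Qed.

Lemma sym_pow_ne0 n' (S : 'M[R]_n'.+1) k : S^T = S -> S != 0 -> S ^+ k != 0.
Proof.
move=> hS S0.
have h2 : forall m, S ^+ (2 ^ m) != 0.
  elim=> [|m IH]; first by rewrite expr1.
  by rewrite expnS mulnC exprM expr2 sq_ne0 // sym_pow.
apply: contra (h2 k) => /eqP hk.
have le : (k <= 2 ^ k)%N by apply: ltnW; apply: ltn_expl.
by rewrite -(subnKC le) exprD hk mul0r.
Qed.

Lemma sr_pos n' (S : 'M[R]_n'.+1) : S^T = S -> S != 0 -> 0 < spectral_radius S.
Proof.
move=> hS S0; rewrite srE.
have hs := has_sup_eig _ S (ltn0Sn n').
rewrite ltNge; apply/negP => hle.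
have all0 : forall w, eigenvalue (map_mx f S) w -> w = 0.
  move=> w ew.
  have : nrm w <= 0.
    apply: le_trans hle; apply: ub_le_sup; first by case: hs.
    by exists w.
  move=> h0.
  have h : complex.Re w ^+ 2 + complex.Im w ^+ 2 <= 0.
    by rewrite -sqrtr_eq0 eq_le h0 sqrtr_ge0.
  have hr : complex.Re w ^+ 2 = 0 by apply/eqP; rewrite eq_le sqr_ge0 andbT;
    apply: le_trans _ h; rewrite lerDl sqr_ge0.
  have hi : complex.Im w ^+ 2 = 0 by apply/eqP; rewrite eq_le sqr_ge0 andbT;
    apply: le_trans _ h; rewrite lerDr sqr_ge0.
  move: hr hi => /eqP; rewrite sqrf_eq0 => /eqP hr /eqP; rewrite sqrf_eq0 => /eqP hi.
  by move: hr hi; clear; case: w => a b /= -> ->.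
have [rs hrs] := roots_fin _ S.
have hp : char_poly (map_mx f S) = 'X ^+ size rs.
  have [_ ->] := hrs 0.
  have : forall z, z \in rs -> z = 0.
    by move=> z zr; apply: all0; have [-> _] := hrs z.
  elim: rs {hrs} => [|z rs IH] h; first by rewrite big_nil expr0.
  rewrite big_cons IH; last by move=> y yr; apply: h; rewrite inE yr orbT.
  by rewrite (h z) ?mem_head // subr0 exprS.
have := Cayley_Hamilton (map_mx f S).
rewrite hp rmorphXn /= horner_mx_X -map_mxXn => /eqP.
rewrite map_mx_eq0; apply/negP; exact: sym_pow_ne0.
Qed.

Lemma key_lev n (A : 'M[R]_n)
  (hshape : forall i j : 'I_n, nat_of_ord j <> (nat_of_ord i).+1 -> A i j = 0)
  (t : R) : 0 < t < 1 ->
  (0 < n)%N -> levinger A t = Num.sqrt (t * (1 - t)) * spectral_radius (A + A^T).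
Proof.
move=> /andP[t0 t1] n0.
set s := Num.sqrt (t * (1 - t)).
have s0 : 0 < s by rewrite sqrtr_gt0; apply: mulr_gt0; lra.
set q := s / t.
have q0 : 0 < q by apply: divr_gt0.
have hq1 : s * q = 1 - t.
  rewrite /q mulrA -expr2 sqr_sqrtr; last by apply: mulr_ge0; lra.
  by field; rewrite gt_eqF.
have hq2 : q * t = s by rewrite /q divfK // gt_eqF.
set S := A + A^T.
set M := (1 - t) *: A + t *: A^T.
set D := diag_mx (\row_(i < n) q ^+ i).
set E := diag_mx (\row_(i < n) q^-1 ^+ i).
have ED : E *m D = 1%:M.
  rewrite /E /D mulmx_diag; apply/matrixP => i j; rewrite !mxE.
  by rewrite exprVn mulVf // expf_neq0 // gt_eqF.
have DE : D *m E = 1%:M.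
  rewrite /E /D mulmx_diag; apply/matrixP => i j; rewrite !mxE.
  by rewrite exprVn mulfV // expf_neq0 // gt_eqF.
have DM : D *m M = (s *: S) *m D.
  rewrite /D mul_diag_mx mul_mx_diag; apply/matrixP => i j; rewrite !mxE.
  have [hij|hij] := eqVneq (nat_of_ord j) i.+1.
    have -> : A j i = 0 by apply: hshape; rewrite hij; lia.
    have -> : q ^+ j = q ^+ i * q by rewrite hij exprSr.
    by rewrite -hq1; ring.
  have -> : A i j = 0 by apply: hshape; apply/eqP.
  have [hji|hji] := eqVneq (nat_of_ord i) j.+1.
    have -> : q ^+ i = q ^+ j * q by rewrite hji exprSr.
    by rewrite -hq2; ring.
  have -> : A j i = 0 by apply: hshape; apply/eqP.
  by ring.
have fs0 : s%:C != 0 by rewrite fmorph_eq0 gt_eqF.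
have h1 : map_mx f E *m map_mx f D = 1%:M by rewrite -map_mxM ED map_mx1.
have h2 : map_mx f D *m map_mx f E = 1%:M by rewrite -map_mxM DE map_mx1.
have h3 : map_mx f D *m map_mx f M = map_mx f (s *: S) *m map_mx f D by rewrite -!map_mxM DM.
have hsim := @eig_sim _ _ (map_mx f M) (map_mx f (s *: S)) (map_mx f D) (map_mx f E) h1 h2 h3.
have heq : forall z, eigenvalue (map_mx f M) z <->
     exists w, eigenvalue (map_mx f S) w /\ z = s%:C * w.
  move=> z; rewrite hsim map_mxZ; split.
    move=> ez; exists (s%:C^-1 * z); split; last by rewrite mulrA mulfV // mul1r.
    have e2 := @eigZ _ _ _ (s%:C^-1) _ ez.
    rewrite scalerA in e2.
    rewrite mulVf in e2; last exact: fs0.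
    rewrite scale1r in e2.
    exact: e2.
  move=> [w [ew ->]].
  exact: (@eigZ _ _ _ (s%:C) _ ew).
have := @spec_scale _ _ M S _ s0 (has_sup_eig _ S n0) heq.
by [].
Qed. End Spec.

Theorem theorem5 (R : realType) (n : nat) (A : 'M[R]_n)
  (hn : (2 <= n)%N)
  (hshape : forall i j : 'I_n, nat_of_ord j <> (nat_of_ord i).+1 -> A i j = 0)
  (hnonneg : forall i j : 'I_n, 0 <= A i j)
  (hpos : exists i j : 'I_n, nat_of_ord j = (nat_of_ord i).+1 /\ 0 < A i j) :
  strictly_concave_on 0 1 (levinger A).
Proof.
move: A hshape hnonneg hpos; case: n hn => [//|n'] hn A hshape hnonneg hpos.
have n0 : (0 < n'.+1)%N by [].
have hS : (A + A^T)^T = A + A^T by apply/matrixP => i j; rewrite !mxE addrC.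
have S0 : A + A^T != 0.
  have [i [j [hij hA]]] := hpos.
  apply/eqP => h0.
  have := congr1 (fun M : 'M[R]_n'.+1 => M i j) h0; rewrite !mxE.
  by have := hnonneg j i; lra.
have rho0 := @sr_pos R n' (A + A^T) hS S0.
move=> x y l hx hy xy hl.
have hz : 0 < (1 - l) * x + l * y < 1.
  by move: hx hy hl => /andP[? ?] /andP[? ?] /andP[? ?]; apply/andP; split; nra.
rewrite (@key_lev R _ A hshape x hx n0) (@key_lev R _ A hshape y hy n0).
rewrite (@key_lev R _ A hshape _ hz n0).
have h := @sqrt_concave R x y l hx hy xy hl.
set rho := spectral_radius _.
set a := Num.sqrt (x * _); set b := Num.sqrt (y * _).
have -> : (1 - l) * (a * rho) + l * (b * rho) = ((1 - l) * a + l * b) * rho by ring.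
by rewrite ltr_pM2r.
Qed.
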